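(* The monic irreducible polynomials over the sign hyperfield $\mathbb S$ are exactly $T$, $T-1$, $T+1$ and $T^2+1$. Consequently every irreducible polynomial over $\mathbb S$ is $\pm$ one of these.
   Context: The sign hyperfield $\mathbb S$ is $\{0,1,-1\}$ with the usual multiplication and hyperaddition $0\boxplus a=\{a\}$, $1\boxplus1=\{1\}$, $(-1)\boxplus(-1)=\{-1\}$, $1\boxplus(-1)=\{0,1,-1\}$. Iterated sums: $\boxplus_{i=1}^n a_i=\bigcup_{b\in\boxplus_{i=1}^{n-1}a_i} b\boxplus a_n$. A polynomial over $\mathbb S$ is a finitely supported sequence $(c_i)$ in $\mathbb S$, written $\sum c_iT^i$, of degree the largest $k$ with $c_k\ne0$; monic means $c_{\deg p}=1$. Hyperproduct: $p\boxdot q=\{\sum e_iT^i : e_i\in \boxplus_{k+l=i} c_kd_l\}$. $p\sim q$ means $p\in a\boxdot q$ for some $a\in\{\pm1\}$. $p$ is irreducible if $\deg p\ge1$ and $p\in q_1\boxdot q_2$ implies $p\sim q_1$ or $p\sim q_2$. *)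

(* Defs.v *)
From HB Require Import structures.
From mathcomp Require Import all_boot.
Set Implicit Arguments. Unset Strict Implicit. Unset Printing Implicit Defensive.

(** The sign hyperfield S = {0, 1, -1}: Z = 0, P = 1, N = -1. *)
Inductive sgn := Z | P | N.

Definition sgn_eqb (a b : sgn) : bool :=
  match a, b with Z, Z | P, P | N, N => true | _, _ => false end.
Lemma sgn_eqP : Equality.axiom sgn_eqb.
Proof. by case; case; constructor. Qed.
HB.instance Definition _ := hasDecEq.Build sgn sgn_eqP.

Definition smul (a b : sgn) : sgn :=
  match a, b with
  | Z, _ | _, Z => Z
  | P, x => x
  | N, P => N
  | N, N => P
  end.

(** hyperaddition: [hadd a b x] iff x \in a (+) b *)
Definition hadd (a b : sgn) (x : sgn) : bool :=
  match a, b with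
  | Z, y => x == y
  | y, Z => x == y
  | P, P => x == P
  | N, N => x == N
  | _, _ => true
  end.

(** iterated hypersum a_1 (+) ... (+) a_n, as a predicate on sgn, computed
    left to right: start from {0} (so that 0 (+) a_1 = {a_1}) and
    successively take the union over b in the partial sum of b (+) a_k. *)
Definition hsum_step (A : sgn -> bool) (a : sgn) : sgn -> bool :=
  fun x => has (fun b => A b && hadd b a x) [:: Z; P; N].
Definition hsum (s : seq sgn) : sgn -> bool := foldl hsum_step (pred1 Z) s.

(** Polynomials over S: finitely supported coefficient sequences, represented
    canonically by their coefficient list with nonzero last entry. *)
Definition spoly := {s : seq sgn | last Z s != Z}.
Definition coef (p : spoly) (i : nat) : sgn := nth Z (val p) i.

Definition deg (p : spoly) : nat := (size (val p)).-1.
Definition monic (p : spoly) : Prop := coef p (deg p) = P.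

(** hyperproduct: e \in p [.] q *)
Definition in_hprod (e p q : spoly) : Prop :=
  forall i : nat,
    hsum [seq smul (coef p k) (coef q (i - k)) | k <- iota 0 i.+1] (coef e i).

Definition mkpoly (s : seq sgn) (H : last Z s != Z) : spoly := exist _ s H.

Definition pone : spoly := @mkpoly [:: P] isT.
Definition pmone : spoly := @mkpoly [:: N] isT.
Definition pT : spoly := @mkpoly [:: Z; P] isT.
Definition pTm1 : spoly := @mkpoly [:: N; P] isT.
Definition pTp1 : spoly := @mkpoly [:: P; P] isT.
Definition pT2p1 : spoly := @mkpoly [:: P; Z; P] isT.

Definition assoc (p q : spoly) : Prop := in_hprod p pone q \/ in_hprod p pmone q.

Definition irreducible (p : spoly) : Prop :=
  1 <= deg p /\
  forall q1 q2 : spoly, in_hprod p q1 q2 -> assoc p q1 \/ assoc p q2.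

(* Main.v *)
Require Import Defs.
From mathcomp Require Import all_boot.
From mathcomp Require Import zify.
Set Implicit Arguments. Unset Strict Implicit. Unset Printing Implicit Defensive.

Definition hsv (bp bn : bool) (x : sgn) : bool :=
  if bp && bn then true else x == (if bp then P else if bn then N else Z).

Lemma hsumE s x : hsum s x = hsv (P \in s) (N \in s) x.
Proof.
elim/last_ind: s x => [|s a IH] x; first by [].
rewrite /hsum foldl_rcons -/(hsum s) /hsum_step /= !IH !mem_rcons !in_cons.
by case: (P \in s); case: (N \in s); case: a; case: x.
Qed.

Definition L (p q : spoly) i := [seq smul (coef p k) (coef q (i - k)) | k <- iota 0 i.+1].

Lemma coef_deg p : coef p (deg p) != Z.
Proof.
case: p => [[|a s] h] //; rewrite /coef /deg.
by rewrite (nth_last Z (a :: s)).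
Qed.

Lemma coef_gt p i : deg p < i -> coef p i = Z.
Proof.
case: p => [[|a s] h] //; rewrite /coef /deg => Hi; apply: nth_default.
by move: Hi; rewrite /=.
Qed.

Lemma deg_char p d : coef p d != Z -> (forall i, d < i -> coef p i = Z) -> deg p = d.
Proof.
move=> H1 H2; case: (ltngtP (deg p) d) => // Hc.
- by rewrite coef_gt in H1.
- by move: (coef_deg p); rewrite H2.
Qed.

Lemma smulx0 x : smul x Z = Z. Proof. by case: x. Qed.
Lemma smul_nz x y : x != Z -> y != Z -> smul x y != Z. Proof. by case: x; case: y. Qed.

Lemma deg_mul e p q : in_hprod e p q -> deg e = deg p + deg q.
Proof.
move=> H; apply: deg_char.
- move: (H (deg p + deg q)); rewrite hsumE.
  set v := smul (coef p (deg p)) (coef q (deg q)).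
  have Hv : v != Z by apply: smul_nz; apply: coef_deg.
  have Hm : forall x, x != Z -> (x \in L p q (deg p + deg q)) = (x == v).
    move=> x Hx; apply/mapP/eqP.
    + case=> k; rewrite mem_iota add0n => Hk Ex; rewrite {}Ex in Hx *.
      case: (ltngtP k (deg p)) => Hkp.
      * by move: Hx; rewrite [coef q _]coef_gt ?smulx0 //; lia.
      * by move: Hx; rewrite [coef p _]coef_gt.
      * by rewrite /v Hkp; congr smul; congr coef; lia.
    + move=> ->; exists (deg p); first by rewrite mem_iota; lia.
      by rewrite /v; congr smul; congr coef; lia.
  rewrite /L in Hm; rewrite !Hm //.
  by clear Hm; move: Hv; case: v => //= _ /eqP ->.
- move=> i Hi; move: (H i); rewrite hsumE.
  have Hm : forall x, x != Z -> (x \in L p q i) = false.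
    move=> x Hx; apply/mapP; case=> k; rewrite mem_iota add0n => Hk Ex; move: Hx; rewrite Ex.
    case: (leqP k (deg p)) => Hkp.
    * by rewrite [coef q _]coef_gt ?smulx0 //; lia.
    * by rewrite [coef p _]coef_gt.
  rewrite /L in Hm; rewrite !Hm //.
  by move/eqP.
Qed.

Lemma L0 f q : L f q 0 = [:: smul (coef f 0) (coef q 0)].
Proof. by []. Qed.
Lemma L1 f q : L f q 1 = [:: smul (coef f 0) (coef q 1); smul (coef f 1) (coef q 0)].
Proof. by []. Qed.

Lemma L2 f q j y : size (val f) <= 3 ->
  hsum (L f q j.+2) y = hsum [:: smul (coef f 0) (coef q j.+2);
     smul (coef f 1) (coef q j.+1); smul (coef f 2) (coef q j)] y.
Proof.
move=> Hs; rewrite !hsumE.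
have E : forall x, x != Z -> (x \in L f q j.+2) = (x \in [:: smul (coef f 0) (coef q j.+2);
     smul (coef f 1) (coef q j.+1); smul (coef f 2) (coef q j)]).
  move=> x Hx; rewrite /L /=.
  have -> : j.+2 - 2 = j by rewrite subSS subSS subn0.
  rewrite !in_cons; congr [|| _, _, _ | _].
  apply/mapP => -[k]; rewrite mem_iota => Hk Ex; move: Hx; rewrite Ex.
  by rewrite /coef nth_default //; lia.
by rewrite !E.
Qed.

Lemma mkq_ok (g : nat -> sgn) m : (0 < m) && (g m.-1 != Z) -> last Z (mkseq g m) != Z.
Proof.
case/andP=> Hm Hg; case: m Hm Hg => [|m] // _ Hg.
by rewrite -(nth_last Z) size_mkseq nth_mkseq.
Qed.

Definition mkq g m H : spoly := exist _ (mkseq g m) (@mkq_ok g m H).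

Lemma coef_mkq g m H i : coef (@mkq g m H) i = if i < m then g i else Z.
Proof.
rewrite /coef /=; case: ltnP => Hi; first by rewrite nth_mkseq.
by rewrite nth_default // size_mkseq.
Qed.

Lemma deg_mkq g m H : deg (@mkq g m H) = m.-1.
Proof. by rewrite /deg /= size_mkseq. Qed.

Lemma hsum_both s y : P \in s -> N \in s -> hsum s y.
Proof. by rewrite hsumE => -> ->. Qed.

Lemma in_hprodL e p q : (forall i, hsum (L p q i) (coef e i)) -> in_hprod e p q.
Proof. by []. Qed.

Definition neg x := smul N x.

Lemma caseA p a (Ha : coef p 0 = a) (Hn : coef p (deg p) = neg a) (Hd : 1 < deg p)
  (Hnz : (0 < deg p) && ((fun _ : nat => neg a) (deg p).-1 != Z)) :
  in_hprod p pTm1 (@mkq (fun _ => neg a) (deg p) Hnz).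
Proof.
have Ha0 : a != Z by move: Hnz => /andP[_] /=; case: (a).
apply: in_hprodL => i; case: i => [|[|j]].
- rewrite L0 coef_mkq Ha ifT; last lia.
  by move: Ha0; case: (a).
- rewrite L1 !coef_mkq !ifT; try lia.
  by apply: hsum_both; move: Ha0; case: (a).
- rewrite L2 // !coef_mkq.
  case: (ltngtP j.+2 (deg p)) => Hc.
  + rewrite !ifT; try lia.
    by apply: hsum_both; move: Ha0; case: (a).
  + by rewrite [coef p _]coef_gt //; case: (_ < _).
  + by rewrite Hc Hn; move: Ha0; case: (a); case: (_ < _).
Qed.

Definition alt (a : sgn) (i : nat) := if odd i then neg a else a.

Lemma caseB p a (Ha : coef p 0 = a) (Hn : coef p (deg p) = a) (Hd : 1 < deg p)
  (Hodd : odd (deg p))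
  (Hnz : (0 < deg p) && (alt a (deg p).-1 != Z)) :
  in_hprod p pTp1 (@mkq (alt a) (deg p) Hnz).
Proof.
have Ha0 : a != Z by move: Hnz => /andP[_]; rewrite /alt; case: (odd _); case: (a).
apply: in_hprodL => i; case: i => [|[|j]].
- rewrite L0 coef_mkq Ha ifT; last lia.
  by move: Ha0; case: (a).
- rewrite L1 !coef_mkq !ifT; try lia.
  by apply: hsum_both; move: Ha0; rewrite /alt /=; case: (a).
- rewrite L2 // !coef_mkq.
  case: (ltngtP j.+2 (deg p)) => Hc.
  + rewrite !ifT; try lia.
    by apply: hsum_both; move: Ha0; rewrite /alt /=; case: (odd j); case: (a).
  + by rewrite [coef p _]coef_gt //; case: (_ < _).
  + rewrite -Hc in Hodd; rewrite Hc Hn /alt /=; rewrite /= negbK in Hodd; rewrite Hodd /=.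
    by move: Ha0; case: (a); case: (_ < _).
Qed.

Definition pTTT : spoly := @mkpoly [:: P; P; P] isT.

Lemma caseC p a (Ha : coef p 0 = a) (Hn : coef p (deg p) = a) (Hd : 2 < deg p)
  (Hodd : ~~ odd (deg p))
  (Hnz : (0 < (deg p).-1) && (alt a (deg p).-1.-1 != Z)) :
  in_hprod p pTTT (@mkq (alt a) (deg p).-1 Hnz).
Proof.
have Ha0 : a != Z by move: Hnz => /andP[_]; rewrite /alt; case: (odd _); case: (a).
apply: in_hprodL => i; case: i => [|[|j]].
- rewrite L0 coef_mkq Ha ifT; last lia.
  by move: Ha0; case: (a).
- rewrite L1 !coef_mkq !ifT; try lia.
  by apply: hsum_both; move: Ha0; rewrite /alt /=; case: (a).
- rewrite L2 // !coef_mkq.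
  case: (ltngtP j.+2 (deg p)) => Hc.
  + rewrite (_ : j.+1 < (deg p).-1 = true); last lia.
    rewrite (_ : j < (deg p).-1 = true); last lia.
    by apply: hsum_both; move: Ha0; rewrite /alt /=; case: (odd j); case: (a); case: (_ < _).
  + rewrite [coef p _]coef_gt //.
    rewrite (_ : j.+2 < (deg p).-1 = false); last lia.
    rewrite (_ : j.+1 < (deg p).-1 = false); last lia.
    rewrite (_ : j < (deg p).-1 = false); last lia.
    by [].
  + rewrite -Hc in Hodd Hn *; rewrite Hn /alt /=; rewrite /= negbK in Hodd.
    rewrite (negbTE Hodd).
    rewrite (_ : j.+2 < j.+1 = false); last lia.
    rewrite (_ : j.+1 < j.+1 = false); last lia.
    rewrite (_ : j < j.+1 = true); last lia.
    by move: Ha0; case: (a).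
Qed.

Lemma caseS p (H0 : coef p 0 = Z) (Hd : 1 < deg p)
  (Hnz : (0 < deg p) && ((fun i => coef p i.+1) (deg p).-1 != Z)) :
  in_hprod p pT (@mkq (fun i => coef p i.+1) (deg p) Hnz).
Proof.
apply: in_hprodL => i; case: i => [|[|j]].
- by rewrite L0 H0.
- rewrite L1 !coef_mkq !ifT; try lia.
  by case: (coef p 1).
- rewrite L2 // !coef_mkq.
  case: (ltnP j.+1 (deg p)) => Hc.
  + by case: (coef p j.+2).
  + by rewrite [coef p j.+2]coef_gt; last lia.
Qed.

Lemma smulC x y : smul x y = smul y x. Proof. by case: x; case: y. Qed.

Lemma in_hprodC e p q : in_hprod e p q -> in_hprod e q p.
Proof.
move=> H; apply: in_hprodL => i; move: (H i); rewrite !hsumE.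
have E : forall x, (x \in L p q i) = (x \in L q p i).
  have I : forall p q x, x \in L p q i -> x \in L q p i.
    move=> p' q' x /mapP [k]; rewrite mem_iota => Hk ->.
    apply/mapP; exists (i - k); first by rewrite mem_iota; lia.
    by rewrite smulC subKn //; lia.
  by move=> x; apply/idP/idP; apply: I.
by rewrite /L in E; rewrite !E.
Qed.

Definition checks (es : seq sgn) (p q : spoly) :=
  all (fun i => hsum (L p q i) (nth Z es i)) (iota 0 (size es + size (val p) + size (val q))).

Lemma checksP e p q : checks (val e) p q -> in_hprod e p q.
Proof.
move=> /allP H; apply: in_hprodL => i.
case: (ltnP i (size (val e) + size (val p) + size (val q))) => Hi.
  by apply: H; rewrite mem_iota; lia.
rewrite /coef nth_default; last lia.
rewrite hsumE.
have E : forall x, x != Z -> (x \in L p q i) = false.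
  move=> x Hx; apply/mapP => -[k]; rewrite mem_iota => Hk Ex; move: Hx; rewrite Ex.
  case: (ltnP k (size (val p))) => Hkp.
  + by rewrite [coef q _]/coef nth_default ?smulx0 //; lia.
  + by rewrite [coef p _]/coef nth_default.
by rewrite !E.
Qed.

Definition lins : seq spoly :=
  [:: @mkpoly [:: Z; P] isT; @mkpoly [:: Z; N] isT; @mkpoly [:: P; P] isT;
      @mkpoly [:: P; N] isT; @mkpoly [:: N; P] isT; @mkpoly [:: N; N] isT].

Definition special (s : seq sgn) : bool :=
  s \in [:: [:: Z; P]; [:: Z; N]; [:: N; P]; [:: P; N]; [:: P; P]; [:: N; N];
           [:: P; Z; P]; [:: N; Z; N]].

Lemma small2 c0 c1 c2 : c2 != Z -> special [:: c0; c1; c2] ||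
  has (fun q1 => has (fun q2 => checks [:: c0; c1; c2] q1 q2) lins) lins.
Proof. by case: c0; case: c1; case: c2; vm_compute. Qed.

Lemma deg_lins : all (fun q => deg q == 1) lins.
Proof. by []. Qed.

Lemma reduce p : 0 < deg p -> special (val p) \/
  exists q1 q2, [/\ 0 < deg q1, 0 < deg q2 & in_hprod p q1 q2].
Proof.
move=> H1; case: (leqP (deg p) 2) => Hd.
  move: H1 Hd; case: p => [[|c0 [|c1 [|c2 [|c3 s]]]] h] //= _ _.
  - by left; move: h; case: c0; case: c1.
  - case/orP: (small2 c0 c1 h) => [Hs|]; first by left.
    case/hasP => q1 Hq1 /hasP [q2 Hq2 Hc]; right; exists q1, q2.
    split; last by apply: checksP.
    + by move/allP: deg_lins => /(_ q1 Hq1) /eqP ->.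
    + by move/allP: deg_lins => /(_ q2 Hq2) /eqP ->.
right.
have Hnd := coef_deg p.
case: (coef p 0 =P Z) => [H0|/eqP Ha].
  have Hnz : (0 < deg p) && ((fun i => coef p i.+1) (deg p).-1 != Z).
    apply/andP; split; first lia.
    change (coef p (deg p).-1.+1 != Z); rewrite prednK //; lia.
  exists pT, (@mkq (fun i => coef p i.+1) (deg p) Hnz); split => //; first by rewrite deg_mkq; lia.
  exact: (caseS H0 (ltnW Hd)).
set a := coef p 0 in Ha.
have [Hn|Hn] : coef p (deg p) = neg a \/ coef p (deg p) = a.
  by move: Ha Hnd; rewrite /neg; case: (a); case: (coef p (deg p)) => //; auto.
  have Hnz : (0 < deg p) && ((fun _ : nat => neg a) (deg p).-1 != Z).
    by rewrite /=; apply/andP; split; [lia | move: Ha; case: (a)].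
  exists pTm1, (@mkq (fun _ => neg a) (deg p) Hnz); split => //; first by rewrite deg_mkq; lia.
  by apply: caseA => //; lia.
case Ho: (odd (deg p)).
  have Hnz : (0 < deg p) && (alt a (deg p).-1 != Z).
    by apply/andP; split; [lia | move: Ha; rewrite /alt; case: (odd _); case: (a)].
  exists pTp1, (@mkq (alt a) (deg p) Hnz); split => //; first by rewrite deg_mkq; lia.
  by apply: caseB => //; lia.
have Hnz : (0 < (deg p).-1) && (alt a (deg p).-1.-1 != Z).
  by apply/andP; split; [lia | move: Ha; rewrite /alt; case: (odd _); case: (a)].
exists pTTT, (@mkq (alt a) (deg p).-1 Hnz); split => //; first by rewrite deg_mkq; lia.
by apply: caseC => //; rewrite Ho.
Qed.

Lemma assoc_deg p q : assoc p q -> deg p = deg q.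
Proof. by case=> /deg_mul. Qed.

Lemma irr_special p : irreducible p -> special (val p).
Proof.
case=> H1 Hi; case: (reduce H1) => // -[q1 [q2 [D1 D2 H]]].
have E := deg_mul H.
by case: (Hi _ _ H) => /assoc_deg; lia.
Qed.

Lemma deg0 q : deg q = 0 -> q = pone \/ q = pmone.
Proof.
case: q => [[|a [|b s]] h] // _.
by case: a h => // h; [left|right]; congr exist; apply: bool_irrelevance.
Qed.

Lemma irr_gen p : 0 < deg p ->
  (forall q1 q2, in_hprod p q1 q2 -> 0 < deg q1 -> 0 < deg q2 -> False) -> irreducible p.
Proof.
move=> H1 Hn; split => // q1 q2 H.
case: (posnP (deg q1)) => D1.
  by right; case: (deg0 D1) => E; rewrite E in H; [left|right].
case: (posnP (deg q2)) => D2.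
  by left; have H' := in_hprodC H; case: (deg0 D2) => E; rewrite E in H'; [left|right].
by case: (Hn _ _ H D1 D2).
Qed.

Lemma irr_deg1 p : deg p = 1 -> irreducible p.
Proof.
move=> D; apply: irr_gen; first by rewrite D.
by move=> q1 q2 /deg_mul; lia.
Qed.

Lemma irr_T2p1 : irreducible pT2p1.
Proof.
apply: irr_gen => // q1 q2 H D1 D2.
have E := deg_mul H.
have E0 : deg pT2p1 = 2 by [].
have [E1 E2] : deg q1 = 1 /\ deg q2 = 1 by lia.
clear D1 D2 E; move: H E1 E2; case: q1 => [[|a0 [|a1 [|? ?]]] h1] //;
  case: q2 => [[|b0 [|b1 [|? ?]]] h2] // H _ _.
move: (H 0) (H 1) (H 2); clear H; move: h1 h2.
by case: a0; case: a1; case: b0; case: b1.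
Qed.

Lemma spE (s : seq sgn) (h h' : last Z s != Z) :
  exist (fun s => last Z s != Z) s h = exist _ s h'.
Proof. by congr exist; apply: bool_irrelevance. Qed.

Theorem mainTheorem9 :
  (forall p : spoly, monic p ->
     (irreducible p <-> [\/ p = pT, p = pTm1, p = pTp1 | p = pT2p1])) /\
  (forall p : spoly, irreducible p ->
     [\/ assoc p pT, assoc p pTm1, assoc p pTp1 | assoc p pT2p1]).
Proof.
split.
  move=> p Hm; split.
    move/irr_special; move: Hm; case: p => s h Hm /= Hs; move: Hs h Hm.
    rewrite /special !inE => /orP [/eqP ->|/orP [/eqP ->|/orP [/eqP ->|/orP [/eqP ->|/orP [/eqP ->|/orP [/eqP ->|/orP [/eqP ->|/eqP ->]]]]]]];
      rewrite /monic /coef /deg /= => Hm h; try discriminate.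
    - by constructor 1; apply: spE.
    - by constructor 2; apply: spE.
    - by constructor 3; apply: spE.
    - by constructor 4; apply: spE.
  case=> ->; try exact: irr_T2p1; exact: irr_deg1.
move=> p /irr_special; case: p => s h /= Hs; move: Hs h.
rewrite /special !inE => /orP [/eqP ->|/orP [/eqP ->|/orP [/eqP ->|/orP [/eqP ->|/orP [/eqP ->|/orP [/eqP ->|/orP [/eqP ->|/eqP ->]]]]]]] h.
- by constructor 1; left; apply: checksP.
- by constructor 1; right; apply: checksP.
- by constructor 2; left; apply: checksP.
- by constructor 2; right; apply: checksP.
- by constructor 3; left; apply: checksP.
- by constructor 3; right; apply: checksP.
- by constructor 4; left; apply: checksP.
- by constructor 4; right; apply: checksP.
Qed.
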